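(* Let $\theta_0\in\mathbb{R}$, let $B\ge1$, and let $\hat\theta_1,\dots,\hat\theta_B$ be independent real-valued random variables. Set $\Delta:=\max_{1\le j\le B}\mathrm{MedBias}_{\theta_0}(\hat\theta_j)$. Then \[ \mathbb{P}\Big(\theta_0\notin\big[\min_{1\le j\le B}\hat\theta_j,\ \max_{1\le j\le B}\hat\theta_j\big]\Big)\le\Big(\tfrac12-\Delta\Big)^B+\Big(\tfrac12+\Delta\Big)^B . \]
   Context: For a real-valued random variable $\hat\theta$ and $\theta_0\in\mathbb{R}$, the median bias is $\mathrm{MedBias}_{\theta_0}(\hat\theta):=\big(\tfrac12-\min\{\mathbb{P}(\hat\theta-\theta_0\ge0),\ \mathbb{P}(\hat\theta-\theta_0\le0)\}\big)_+$, where $(x)_+=\max\{x,0\}$. *)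

(* Defs.v *)
From HB Require Import structures.
From mathcomp Require Import all_boot all_order all_algebra.
From mathcomp Require Import all_classical all_reals all_analysis.
Set Implicit Arguments. Unset Strict Implicit. Unset Printing Implicit Defensive.
Import Order.TTheory GRing.Theory Num.Theory.
Local Open Scope classical_set_scope.
Local Open Scope ring_scope.

(* Mutual independence of a finite family of real random variables:
   for every choice of Borel sets A_j, the joint probability factorizes.
   (Taking A_j = setT for j outside a subfamily gives the product rule
   for every subfamily.) *)
Definition mutually_independent_RVs d (T : measurableType d) (R : realType)
    (P : probability T R) (B : nat) (X : 'I_B -> {RV P >-> R}) : Prop :=
  forall A : 'I_B -> set R, (forall j, measurable (A j)) ->
    P (\bigcap_(j in [set: 'I_B]) (X j @^-1` A j)) =
    (\prod_(j < B) P (X j @^-1` A j))%E.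

Definition medbias d (T : measurableType d) (R : realType)
    (P : probability T R) (X : {RV P >-> R}) (theta0 : R) : R :=
  Num.max 0 (2^-1 - Num.min (fine (P [set w | 0 <= X w - theta0]))
                            (fine (P [set w | X w - theta0 <= 0]))).

(* Main.v *)
Require Import Defs.
From HB Require Import structures.
From mathcomp Require Import all_boot all_order all_algebra.
From mathcomp Require Import all_classical all_reals all_analysis.
From mathcomp Require Import lra.
Import Order.TTheory GRing.Theory Num.Theory.
Local Open Scope classical_set_scope.
Local Open Scope ring_scope.
Lemma step_ineq (R : realFieldType) (A B a b c C S : R) :
  0 <= A -> 0 <= B -> 0 <= a -> 0 <= b -> a + b <= 1 -> a <= c -> b <= c ->
  2^-1 <= c -> c <= 1 -> A <= C -> B <= C -> A + B <= C + S ->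
  A * a + B * b <= C * c + S * (1 - c).
Proof.
move=> A0 B0 a0 b0 ab ac bc c2 c1 AC BC ABCS.
have h1 : 0 <= B * (1 - a - b) by apply: mulr_ge0; lra.
have h1' : 0 <= A * (1 - a - b) by apply: mulr_ge0; lra.
have h3 : 0 <= (1 - c) * (C + S - A - B) by apply: mulr_ge0; lra.
have h4 : 0 <= (c - (1 - c)) * (C - A) by apply: mulr_ge0; lra.
have h4' : 0 <= (c - (1 - c)) * (C - B) by apply: mulr_ge0; lra.
case: (leP B A) => AB.
  have h2 : 0 <= (c - a) * (A - B) by apply: mulr_ge0; lra.
  nra.
have h2 : 0 <= (c - b) * (B - A) by apply: mulr_ge0; lra.
nra.
Qed.

Lemma prod_bound (R : realFieldType) (c : R) n (a b : 'I_n -> R) :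
  2^-1 <= c -> c <= 1 -> (forall i, 0 <= a i) -> (forall i, 0 <= b i) ->
  (forall i, a i <= c) -> (forall i, b i <= c) -> (forall i, a i + b i <= 1) ->
  [/\ 0 <= \prod_i a i, 0 <= \prod_i b i, \prod_i a i <= c ^+ n,
      \prod_i b i <= c ^+ n &
      \prod_i a i + \prod_i b i <= c ^+ n + (1 - c) ^+ n].
Proof.
move=> c2 c1; elim: n a b => [|n IH] a b a0 b0 ac bc ab.
  rewrite !big_ord0 !expr0; split=> //; lra.
rewrite !big_ord_recr /= !exprSr.
have [A0 B0 AC BC ABS] := IH (fun i => a (widen_ord (leqnSn n) i))
   (fun i => b (widen_ord (leqnSn n) i)) (fun i => a0 _) (fun i => b0 _)
   (fun i => ac _) (fun i => bc _) (fun i => ab _).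
split.
- by apply: mulr_ge0.
- by apply: mulr_ge0.
- by apply: ler_pM.
- by apply: ler_pM.
- by apply: step_ineq.
Qed.

Lemma prod_bound2 (R : realFieldType) (c : R) n (a b : 'I_n -> R) :
  2^-1 <= c -> c <= 1 -> (forall i, 0 <= a i) -> (forall i, 0 <= b i) ->
  (forall i, a i <= c) -> (forall i, b i <= c) -> (forall i, a i + b i <= 1) ->
  \prod_i a i + \prod_i b i <= (1 - c) ^+ n + c ^+ n.
Proof.
move=> *; have [] := @prod_bound R c n a b => // _ _ _ _ H; rewrite [_ + c ^+ n]addrC; exact: H.
Qed.
Theorem lemma1 (d : measure_display) (T : measurableType d) (R : realType)
    (P : probability T R) (theta0 : R) (B : nat) (hB : (0 < B)%N)
    (X : 'I_B -> {RV P >-> R}) :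
  mutually_independent_RVs X ->
  let Delta := \big[Num.max/0]_(j < B) medbias (X j) theta0 in
  (P [set w | theta0 \notin
       `[\big[Num.min/X (Ordinal hB) w]_(j < B) X j w,
         \big[Num.max/X (Ordinal hB) w]_(j < B) X j w]] <=
  ((2^-1 - Delta) ^+ B + (2^-1 + Delta) ^+ B)%:E)%E.
Proof.
move=> hind; cbv zeta.
set Delta := \big[Num.max/0]_(j < B) _.
pose L j := X j @^-1` `]-oo, theta0].
pose G j := X j @^-1` `[theta0, +oo[.
have mL j : measurable (L j) by apply: measurable_funPTI; exact: measurable_itv.
have mG j : measurable (G j) by apply: measurable_funPTI; exact: measurable_itv.
have eL j : [set w | X j w - theta0 <= 0] = L j.
  by apply/seteqP; split => w; rewrite /L /preimage /= in_itv /= subr_le0.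
have eG j : [set w | 0 <= X j w - theta0] = G j.
  by apply/seteqP; split => w; rewrite /G /preimage /= in_itv /= subr_ge0 andbT.
pose q j := fine (P (L j)).
pose p j := fine (P (G j)).
have fL j : P (L j) = (q j)%:E by rewrite fineK // fin_num_measure.
have fG j : P (G j) = (p j)%:E by rewrite fineK // fin_num_measure.
have q01 j : 0 <= q j <= 1.
  by rewrite -!lee_fin -fL measure_ge0 probability_le1.
have p01 j : 0 <= p j <= 1.
  by rewrite -!lee_fin -fG measure_ge0 probability_le1.
have pq1 j : 1 <= p j + q j.
  rewrite -lee_fin EFinD -fL -fG -(probability_setT P).
  have -> : [set: T] = G j `|` L j.
    apply/seteqP; split => w //= _.
    rewrite /G /L /preimage /= !in_itv /= andbT.
    by case: (leP theta0 (X j w)) => h; [left|right; exact: ltW].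
  exact: measureU2.
pose I1 := \bigcap_(j in [set: 'I_B]) (X j @^-1` `]theta0, +oo[).
pose I2 := \bigcap_(j in [set: 'I_B]) (X j @^-1` `]-oo, theta0[).
have -> : [set w | theta0 \notin
       `[\big[Num.min/X (Ordinal hB) w]_(j < B) X j w,
         \big[Num.max/X (Ordinal hB) w]_(j < B) X j w]] = I1 `|` I2.
  apply/seteqP; split => w /=.
  - rewrite in_itv /= negb_and -!ltNge => /orP [hlt|hlt]; [left|right] => j _ /=;
      rewrite in_itv /= ?andbT.
    + exact: lt_le_trans hlt (bigmin_le _ j _).
    + by move: hlt; apply: le_lt_trans; apply: (le_bigmax _ _ j).
  - rewrite in_itv /= negb_and -!ltNge => -[] h; apply/orP; [left|right].
    + apply: lt_bigmin => [|j _]; first by have := h (Ordinal hB) I; rewrite /= in_itv /= andbT.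
      by have := h j I; rewrite /= in_itv /= andbT.
    + apply: bigmax_lt => [|j _]; first by have := h (Ordinal hB) I; rewrite /= in_itv /=.
      by have := h j I; rewrite /= in_itv /=.
have mI1 : measurable I1.
  apply: fin_bigcap_measurable => [|j _]; first exact: finite_finset.
  by apply: measurable_funPTI; exact: measurable_itv.
have mI2 : measurable I2.
  apply: fin_bigcap_measurable => [|j _]; first exact: finite_finset.
  by apply: measurable_funPTI; exact: measurable_itv.
apply: le_trans (measureU2 _ mI1 mI2) _.
have e1 : P I1 = (\prod_(j < B) P (X j @^-1` `]theta0, +oo[))%E :=
  hind (fun _ => `]theta0, +oo[%classic) (fun j => measurable_itv _).
have e2 : P I2 = (\prod_(j < B) P (X j @^-1` `]-oo, theta0[))%E :=
  hind (fun _ => `]-oo, theta0[%classic) (fun j => measurable_itv _).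
change (P I1 + P I2 <= ((2^-1 - Delta) ^+ B + (2^-1 + Delta) ^+ B)%:E)%E.
rewrite e1 e2.
have hA j : P (X j @^-1` `]theta0, +oo[) = (1 - q j)%:E.
  have -> : X j @^-1` `]theta0, +oo[ = ~` L j.
    apply/seteqP; split => w; rewrite /L /preimage /setC /= !in_itv /= ?andbT => h.
      by rewrite leNgt h.
    by rewrite ltNge; apply/negP.
  by rewrite probability_setC // fL.
have hB' j : P (X j @^-1` `]-oo, theta0[) = (1 - p j)%:E.
  have -> : X j @^-1` `]-oo, theta0[ = ~` G j.
    apply/seteqP; split => w; rewrite /G /preimage /setC /= !in_itv /= ?andbT => h.
      by rewrite leNgt h.
    by rewrite ltNge; apply/negP.
  by rewrite probability_setC // fG.
rewrite (eq_bigr _ (fun j _ => hA j)) (eq_bigr _ (fun j _ => hB' j)).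
rewrite !prodEFin -EFinD lee_fin.
have /bigmax_leP [D0 Dj] : Delta <= Delta := lexx _.
have mb j : 2^-1 - Num.min (p j) (q j) <= Delta.
  apply: le_trans (Dj j isT).
  by rewrite /medbias eL eG le_max lexx orbT.
have hmin j : Num.min (p j) (q j) <= p j /\ Num.min (p j) (q j) <= q j.
  by rewrite !ge_min !lexx orbT.
have D2 : Delta <= 2^-1.
  apply/bigmax_leP; split; first by rewrite invr_ge0.
  move=> j _; rewrite /medbias eL eG ge_max; apply/andP; split.
    by rewrite invr_ge0.
  have : 0 <= Num.min (p j) (q j).
    by rewrite le_min; have := p01 j; have := q01 j; move=> /andP[-> _] /andP[-> _].
  lra.
have -> : 2^-1 - Delta = 1 - (2^-1 + Delta) by lra.
apply: (@prod_bound2 R (2^-1 + Delta) B (fun j => 1 - q j)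
  (fun j => 1 - p j)).
- lra.
- lra.
- by move=> j; have := q01 j; move=> /andP[_ h]; lra.
- by move=> j; have := p01 j; move=> /andP[_ h]; lra.
- by move=> j; have := mb j; have := hmin j; case=> h1 h2; lra.
- by move=> j; have := mb j; have := hmin j; case=> h1 h2; lra.
- by move=> j; have := pq1 j; lra.
Qed.
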